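(* Let $n\ge 2$ and let $D$ be any $n$-qubit $\textsc{CZ}$-layer. Let $R$ denote the complete qubit reversal $|x_1x_2\cdots x_n\rangle\mapsto|x_nx_{n-1}\cdots x_1\rangle$. Then the unitary $R\,D$ (a $\textsc{CZ}$-layer followed by qubit reversal; denoted $\widehat{\text{-CZ-}}$) can be implemented by a circuit over the gate library $\{\textsc{P},\textsc{P}^\dagger,\textsc{Z},\textsc{CNOT}\}$ in which every $\textsc{CNOT}$ acts on two adjacent qubits of the line $1,2,\dots,n$ (linear nearest neighbour architecture) and whose $\textsc{CNOT}$ depth (two-qubit depth) is at most $2n+2$.
   Context: $\textsc{P}=\mathrm{diag}(1,i)$, $\textsc{Z}=\textsc{P}^2$, $\textsc{CNOT}|a,b\rangle=|a,a\oplus b\rangle$, $\textsc{CZ}|a,b\rangle=(-1)^{ab}|a,b\rangle$. A $\textsc{CZ}$-layer is any product of $\textsc{CZ}$ gates on pairs of the $n$ qubits. Linear nearest neighbour (LNN) architecture: qubits are arranged on a line and two-qubit gates may only act on qubits $j,j+1$. The two-qubit depth of a circuit is the minimum number of time steps needed to execute its two-qubit gates when each step consists of two-qubit gates on pairwise disjoint qubits (single-qubit gates are not counted). *)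

(* Defs.v *)
(* n-qubit operators are represented by their matrix entries
   <y|U|x> over algC, basis states indexed by {ffun 'I_n -> bool}. *)
From HB Require Import structures.
From mathcomp Require Import all_boot all_order all_algebra all_field.
Set Implicit Arguments. Unset Strict Implicit. Unset Printing Implicit Defensive.
Import Order.TTheory GRing.Theory Num.Theory.
Local Open Scope ring_scope.

Section Circuits.
Variable n : nat.

Definition basis := {ffun 'I_n -> bool}.

Definition op := basis -> basis -> algC.

Definition op_id : op := fun y x => (y == x)%:R.

(* opmul A B = A B  (B applied first) *)
Definition opmul (A B : op) : op := fun y x => \sum_(z : basis) A y z * B z x.

Definition diag_op (f : basis -> algC) : op := fun y x => (y == x)%:R * f x.
Definition perm_op (p : basis -> basis) : op := fun y x => (y == p x)%:R.

Inductive sgate := GP | GPdg | GZ.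

Definition sgate_op (g : sgate) (q : 'I_n) : op :=
  diag_op (fun x => if x q then
                      match g with GP => 'i | GPdg => - 'i | GZ => -1 end
                    else 1).

Definition cnot_map (c t : 'I_n) (x : basis) : basis :=
  [ffun k => if k == t then x t (+) x c else x k].
Definition cnot_op (c t : 'I_n) : op := perm_op (cnot_map c t).

Definition cz_op (i j : 'I_n) : op :=
  diag_op (fun x => if x i && x j then -1 else 1).

Definition czlayer_op (D : seq ('I_n * 'I_n)) : op :=
  foldr (fun p acc => opmul (cz_op p.1 p.2) acc) op_id D.

Definition reversal_op : op := perm_op (fun x => [ffun k => x (rev_ord k)]).

(* A circuit of CNOT depth d is a sequence of d layers; each layer is an
   arbitrary sequence of single-qubit gates followed by one time step of
   CNOTs acting on pairwise disjoint qubits; a final sequence of single-qubit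
   gates ends the circuit. *)
Record layer := Layer { singles : seq (sgate * 'I_n); cnots : seq ('I_n * 'I_n) }.

Definition singles_op (s : seq (sgate * 'I_n)) : op :=
  foldl (fun acc g => opmul (sgate_op g.1 g.2) acc) op_id s.
Definition cnots_op (s : seq ('I_n * 'I_n)) : op :=
  foldl (fun acc p => opmul (cnot_op p.1 p.2) acc) op_id s.
Definition layer_op (L : layer) : op :=
  opmul (cnots_op (cnots L)) (singles_op (singles L)).
Definition circuit_op (ls : seq layer) (fin : seq (sgate * 'I_n)) : op :=
  opmul (singles_op fin) (foldl (fun acc L => opmul (layer_op L) acc) op_id ls).

Definition lnn_pair (p : 'I_n * 'I_n) : bool :=
  (p.1.+1 == p.2 :> nat) || (p.2.+1 == p.1 :> nat).

Definition layer_ok (L : layer) : bool :=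
  all lnn_pair (cnots L) && uniq (flatten [seq [:: p.1; p.2] | p <- cnots L]).

End Circuits.

(* Main.v *)
Require Import Defs.
From HB Require Import structures.
From mathcomp Require Import all_boot all_order all_algebra all_field.
Import Order.TTheory GRing.Theory Num.Theory.
From mathcomp Require Import zify.
From Stdlib Require Import FunctionalExtensionality.
Set Implicit Arguments. Unset Strict Implicit. Unset Printing Implicit Defensive.

(* Proof: Kutin-Moulton-Smithline style reversal network in
   the "difference encoding", with phases inserted where parities appear. *)

Ltac dest := repeat match goal with
  | H : context [if _ then _ else _] |- _ => revert H end;
  repeat match goal with |- context [if ?b then _ else _] =>
     lazymatch b with context [if _ then _ else _] => fail | _ =>
     let H := fresh "H" in case H: b end end; intros.

Section Comb.
Variable n : nat.
Definition qq t p := if p %% 2 == t %% 2 then p else (2*n.+1).-1 - p.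
Definition rr t p := if t <= qq t p then qq t p - t else qq t p + 2*n.+1 - t.
Definition EE t p := if rr t p < n.+1 then rr t p else (2*n.+1).-1 - rr t p.
Definition sgm t p := if p %% 2 == t %% 2 then (if p < n then p.+1 else p)
                      else (if 0 < p then p.-1 else p).
Ltac crush := rewrite /EE /rr /qq /sgm; dest; lia.

Lemma EE0 p : p <= n -> EE 0 p = p.
Proof. move=> ?. crush. Qed.
Lemma EEm p : p <= n -> EE n.+1 p = n - p.
Proof. move=> ?. crush. Qed.
Lemma EEle t p : t <= n.+1 -> p <= n -> EE t p <= n.
Proof. move=> ? ?. crush. Qed.
Lemma qqlt t p : p <= n -> qq t p < 2 * n.+1.
Proof. move=> ?. rewrite /qq; dest; lia. Qed.
Lemma sgmle t p : p <= n -> sgm t p <= n.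
Proof. move=> ?. rewrite /sgm; dest; lia. Qed.
Lemma qqS t p : p <= n -> qq t.+1 p =
  if qq t (sgm t p) == (2*n.+1).-1 then 0 else (qq t (sgm t p)).+1.
Proof. move=> ?. rewrite /qq /sgm; dest; lia. Qed.
Lemma rrS t p : t < n.+1 -> p <= n -> rr t.+1 p = rr t (sgm t p).
Proof.
move=> ? hp. rewrite /rr qqS //. have := qqlt t (sgmle t hp).
move: (qq t (sgm t p)) => q ?. dest; lia. Qed.
Lemma EEstep t p : t < n.+1 -> p <= n -> EE t.+1 p = EE t (sgm t p).
Proof. move=> ? ?. by rewrite /EE rrS. Qed.
Definition q0 a := if a %% 2 == 0 then a else (2*n.+1).-1 - a.
Definition qa t a := if q0 a + t < 2*n.+1 then q0 a + t else q0 a + t - 2*n.+1.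
Definition epos t a := if qa t a < n.+1 then qa t a else (2*n.+1).-1 - qa t a.
Lemma eposle t a : t <= n.+1 -> a <= n -> epos t a <= n.
Proof. move=> ? ?. rewrite /epos /qa /q0; dest; lia. Qed.
Lemma EEepos t a : t <= n.+1 -> a <= n -> EE t (epos t a) = a.
Proof. move=> ? ?. rewrite /EE /rr /qq /epos /qa /q0; dest; lia. Qed.
Definition t0 a b := let s := (q0 a + q0 b) %/ 2 in
  if s <= n then n - s else (2*n.+1).-1 - s.
Lemma meetE a b : a < b <= n -> t0 a b < n.+1 /\
  (((epos (t0 a b) a).+1 = epos (t0 a b) b /\ epos (t0 a b) a < n) \/
   ((epos (t0 a b) b).+1 = epos (t0 a b) a /\ epos (t0 a b) b < n)).
Proof.
move=> ?.
have [ea|ea] : a %% 2 = 0 \/ a %% 2 = 1 by lia.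
all: have [eb|eb] : b %% 2 = 0 \/ b %% 2 = 1 by lia.
all: rewrite /t0 /epos /qa /q0 ea eb /=; dest; lia.
Qed.
Lemma sgm_cases k w : w < n ->
 (w %% 2 == k %% 2 /\ sgm k w = w.+1 /\ sgm k w.+1 = w) \/
 (w %% 2 != k %% 2 /\ sgm k w = (if 0 < w then w.-1 else w) /\
    sgm k w.+1 = (if w.+1 < n then w.+2 else w.+1)).
Proof. move=> ?. rewrite /sgm; dest; lia. Qed.
End Comb.

Section Sem.
Variable n : nat.
Local Open Scope ring_scope.
Definition mono (f : basis n -> basis n) (c : basis n -> algC) : op n :=
  fun y x => (y == f x)%:R * c x.

Lemma opmul_mono f c g d :
  opmul (mono f c) (mono g d) = mono (f \o g) (fun x => c (g x) * d x).
Proof.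
apply: functional_extensionality => y; apply: functional_extensionality => x.
rewrite /opmul /mono (bigD1 (g x)) //= eqxx mul1r big1 ?addr0 ?mulrA //.
by move=> z /negbTE ->; rewrite mul0r mulr0.
Qed.

Lemma op_id_mono : @op_id n = mono id (fun _ => 1).
Proof.
by apply: functional_extensionality => y; apply: functional_extensionality => x;
  rewrite /mono mulr1.
Qed.
Lemma diag_mono f : diag_op f = mono id f. Proof. by []. Qed.
Lemma perm_mono p : perm_op p = mono p (fun _ => 1).
Proof.
by apply: functional_extensionality => y; apply: functional_extensionality => x;
  rewrite /mono mulr1.
Qed.

Definition gval (g : sgate) : algC := match g with GP => 'i | GPdg => - 'i | GZ => -1 end.
Definition gph (g : sgate * 'I_n) (x : basis n) : algC := if x g.2 then gval g.1 else 1.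
Definition sphase (s : seq (sgate * 'I_n)) x := \prod_(g <- s) gph g x.

Lemma singles_mono s : singles_op s = mono id (sphase s).
Proof.
rewrite /singles_op op_id_mono.
have : forall c, foldl (fun acc g => opmul (sgate_op g.1 g.2) acc) (mono id c) s =
   mono id (fun x => sphase s x * c x).
  elim: s => [|g s IH] c /=.
    by congr mono; apply: functional_extensionality => x; rewrite /sphase big_nil mul1r.
  rewrite /sgate_op diag_mono opmul_mono IH; congr mono.
  apply: functional_extensionality => x; rewrite /sphase big_cons /= mulrA [gph _ _ * _]mulrC.
  by [].
move=> ->; congr mono; apply: functional_extensionality => x; exact: mulr1.
Qed.

Definition cstep (F : basis n -> basis n) (p : 'I_n * 'I_n) := cnot_map p.1 p.2 \o F.
Definition cmap (l : seq ('I_n * 'I_n)) := foldl cstep id l.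

Lemma cnots_mono l : cnots_op l = mono (cmap l) (fun _ => 1).
Proof.
rewrite /cnots_op op_id_mono /cmap.
elim: l (@id (basis n)) => [|p l IH] F //=.
rewrite /cnot_op perm_mono opmul_mono -IH; congr (foldl _ (mono _ _) _).
by apply: functional_extensionality => x; rewrite mulr1.
Qed.

Definition rstep (fc : (basis n -> basis n) * (basis n -> algC)) (L : layer n) :=
  (cmap (cnots L) \o fc.1, fun x => sphase (singles L) (fc.1 x) * fc.2 x).

Lemma circuit_mono ls fin :
  circuit_op ls fin = mono (foldl rstep (id, fun _ => 1) ls).1
     (fun x => sphase fin ((foldl rstep (id, fun _ => 1) ls).1 x) *
               (foldl rstep (id, fun _ => 1) ls).2 x).
Proof.
rewrite /circuit_op singles_mono op_id_mono.
have H : forall fc, foldl (fun acc L => opmul (layer_op L) acc) (mono fc.1 fc.2) ls =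
  mono (foldl rstep fc ls).1 (foldl rstep fc ls).2.
  elim: ls => [|L ls IH] fc /=; first by case: fc.
  rewrite /layer_op cnots_mono singles_mono !opmul_mono -IH; congr (foldl _ (mono _ _) _).
  by apply: functional_extensionality => x; rewrite mul1r.
by rewrite (H (id, fun _ => 1)) opmul_mono.
Qed.

Definition czph (D : seq ('I_n * 'I_n)) (x : basis n) : algC :=
  \prod_(p <- D) (if x p.1 && x p.2 then -1 else 1).
Definition revmap (x : basis n) : basis n := [ffun k => x (rev_ord k)].

Lemma rhs_mono D : opmul (reversal_op (n:=n)) (czlayer_op D) = mono revmap (czph D).
Proof.
rewrite /reversal_op perm_mono.
have -> : czlayer_op D = mono id (czph D).
  elim: D => [|p D IH] /=; first by rewrite op_id_mono /czph; congr mono;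
    apply: functional_extensionality => x; rewrite big_nil.
  rewrite /czlayer_op /= -/(czlayer_op D) IH /cz_op diag_mono opmul_mono; congr mono.
  by apply: functional_extensionality => x; rewrite /czph big_cons.
rewrite opmul_mono; congr mono; apply: functional_extensionality => x; exact: mul1r.
Qed.
End Sem.

Section Cn.
Variable n : nat.
Lemma cmap_spec (l : seq ('I_n * 'I_n)) x :
  (forall p p', p \in l -> p' \in l -> p.1 != p'.2) ->
  cmap l x = [ffun w => x w (+) \big[addb/false]_(p <- l | p.2 == w) x p.1].
Proof.
elim/last_ind: l => [|l p IH] H.
  by apply/ffunP => w; rewrite ffunE big_nil addbF.
have H' : forall q q', q \in l -> q' \in l -> q.1 != q'.2.
  by move=> q q' hq hq'; apply: H; rewrite mem_rcons inE ?hq ?hq' orbT.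
rewrite /cmap foldl_rcons -/(cmap l) /cstep /= IH //.
apply/ffunP => w; rewrite !ffunE big_rcons /=.
have Hp1 : \big[addb/false]_(q <- l | q.2 == p.1) x q.1 = false.
  rewrite big_seq_cond big1 // => q /andP [hq /eqP hq2].
  have := H p q; rewrite mem_rcons inE eqxx mem_rcons inE hq orbT => /(_ isT isT).
  by rewrite hq2 eqxx.
case: (eqVneq w p.2) => [->|ne]; first by rewrite Hp1 addbF addbA.
by rewrite addbF.
Qed.
End Cn.

Lemma big_xor_pred1 (r : seq nat) (c : nat) (F : nat -> bool) :
  uniq r -> \big[addb/false]_(j <- r | j == c) F j = (c \in r) && F c.
Proof.
elim: r => [|a r IH] /=; first by rewrite big_nil.
move=> /andP [har ur]; rewrite big_cons IH // inE.
case: eqP => [<-|ne]; last by rewrite eq_sym; case: eqP.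
by rewrite eqxx (negbTE har) /= addbF.
Qed.

Section Lay.
Variable N : nat.
Local Notation n := N.+1.

Definition LA k : seq ('I_n * 'I_n) :=
  [seq (inord j, inord j.-1) | j <- iota 0 n & (j %% 2 == k %% 2) && (0 < j)].
Definition LB k : seq ('I_n * 'I_n) :=
  [seq (inord j, inord j.+1) | j <- iota 0 n & (j %% 2 == k %% 2) && (j.+1 < n)].

Lemma inord_eq i (w : 'I_n) : i < n -> (inord i == w) = (i == w).
Proof. by move=> hi; rewrite -(inj_eq val_inj) /= inordK. Qed.

Lemma LA_xor k (x : basis n) (w : 'I_n) :
  \big[addb/false]_(p <- LA k | p.2 == w) x p.1 =
  [&& w.+1 < n, w.+1 %% 2 == k %% 2 & x (inord w.+1)].
Proof.
rewrite big_map big_filter_cond big_seq_cond.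
have E : forall j, (j \in iota 0 n) && ((j %% 2 == k %% 2) && (0 < j) && (inord j.-1 == w)) =
     (j == w.+1) && ((w.+1 < n) && (w.+1 %% 2 == k %% 2)).
  move=> j; rewrite mem_iota add0n /=.
  case hj: (j < n) => /=; last lia.
  rewrite inord_eq; lia.
rewrite (eq_bigl _ _ E).
case C: ((w.+1 < n) && (w.+1 %% 2 == k %% 2)).
  rewrite (eq_bigl (fun j => j == w.+1)); last by move=> j; rewrite andbT.
  rewrite big_xor_pred1; last exact: iota_uniq.
  rewrite mem_iota /=; by case/andP: C => -> ->.
rewrite big1; first by rewrite andbA C.
by move=> j; rewrite andbF.
Qed.

Lemma LB_xor k (x : basis n) (w : 'I_n) :
  \big[addb/false]_(p <- LB k | p.2 == w) x p.1 =
  [&& 0 < w, w.-1 %% 2 == k %% 2 & x (inord w.-1)].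
Proof.
rewrite big_map big_filter_cond big_seq_cond.
have E : forall j, (j \in iota 0 n) && ((j %% 2 == k %% 2) && (j.+1 < n) && (inord j.+1 == w)) =
     (j == w.-1) && ((0 < w) && (w.-1 %% 2 == k %% 2)).
  move=> j; rewrite mem_iota add0n /=.
  have := ltn_ord w => hw.
  case hj: (j.+1 < n); last by rewrite andbF andFb; lia.
  rewrite inord_eq //; lia.
rewrite (eq_bigl _ _ E).
case C: ((0 < w) && (w.-1 %% 2 == k %% 2)).
  rewrite (eq_bigl (fun j => j == w.-1)); last by move=> j; rewrite andbT.
  rewrite big_xor_pred1; last exact: iota_uniq.
  rewrite mem_iota /=.
  case/andP: C => -> ->; have := ltn_ord w => hw.
  by rewrite (_ : w.-1 < n) //; lia.
rewrite big1; first by rewrite andbA C.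
by move=> j; rewrite andbF.
Qed.

Lemma LA_disj k p p' : p \in LA k -> p' \in LA k -> p.1 != p'.2.
Proof.
move=> /mapP [j]; rewrite mem_filter mem_iota => /andP [/andP [h1 h2] h3] ->.
move=> /mapP [j']; rewrite mem_filter mem_iota => /andP [/andP [h1' h2'] h3'] -> /=.
rewrite -(inj_eq val_inj) /= !inordK; lia.
Qed.
Lemma LB_disj k p p' : p \in LB k -> p' \in LB k -> p.1 != p'.2.
Proof.
move=> /mapP [j]; rewrite mem_filter mem_iota => /andP [/andP [h1 h2] h3] ->.
move=> /mapP [j']; rewrite mem_filter mem_iota => /andP [/andP [h1' h2'] h3'] -> /=.
rewrite -(inj_eq val_inj) /= !inordK; lia.
Qed.

Lemma round_spec k (y : basis n) (w : 'I_n) :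
  cmap (LB k) (cmap (LA k) y) w =
  y w (+) [&& w.+1 < n, w.+1 %% 2 == k %% 2 & y (inord w.+1)]
      (+) [&& 0 < w, w.-1 %% 2 == k %% 2 & y (inord w.-1)].
Proof.
rewrite (cmap_spec _ (@LB_disj k)) ffunE LB_xor (cmap_spec _ (@LA_disj k)) !ffunE LA_xor.
have hw := ltn_ord w.
case h1: (0 < w) => //=; case h2: (w.-1 %% 2 == k %% 2) => //=.
rewrite LA_xor inordK; last lia.
rewrite (_ : (w.-1.+1 %% 2 == k %% 2) = false) ?andbF ?addbF //; lia.
Qed.

Lemma uniq_flat (T : eqType) (s : seq nat) (f g : nat -> T) (d : T -> nat) :
  uniq s -> (forall j, j \in s -> [/\ d (f j) = j, d (g j) = j & f j != g j]) ->
  uniq (flatten [seq [:: f j; g j] | j <- s]).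
Proof.
have mem : forall (s : seq nat) z, z \in flatten [seq [:: f j; g j] | j <- s] ->
    (forall j, j \in s -> [/\ d (f j) = j, d (g j) = j & f j != g j]) -> d z \in s.
  elim=> [|a s0 IH] z //=; rewrite !inE => /orP [/eqP -> | /orP [/eqP -> | hz]] H.
  - by have [-> _ _] := H a (mem_head _ _); rewrite eqxx.
  - by have [_ -> _] := H a (mem_head _ _); rewrite eqxx.
  - rewrite IH ?orbT // => j hj; apply: H; by rewrite inE hj orbT.
elim: s => [|a s IH] //= /andP [ha us] H.
have H' : forall j, j \in s -> [/\ d (f j) = j, d (g j) = j & f j != g j].
  by move=> j hj; apply: H; rewrite inE hj orbT.
have [da db ne] := H a (mem_head _ _).
rewrite /= inE negb_or ne /= IH // andbT; apply/andP; split.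
  by apply/negP => /mem /(_ H'); rewrite da (negbTE ha).
by apply/negP => /mem /(_ H'); rewrite db (negbTE ha).
Qed.

Lemma LA_ok k s : layer_ok (Layer s (LA k)).
Proof.
rewrite /layer_ok /=; apply/andP; split.
  apply/allP => p /mapP [j]; rewrite mem_filter mem_iota => /andP [/andP [h1 h2] h3] ->.
  rewrite /lnn_pair /= !inordK; lia.
rewrite /LA -map_comp.
apply: (@uniq_flat _ _ (fun j => inord j) (fun j => inord j.-1)
   (fun z : 'I_n => if z %% 2 == k %% 2 then (z : nat) else z.+1)).
  exact/filter_uniq/iota_uniq.
move=> j; rewrite mem_filter mem_iota => /andP [/andP [h1 h2] h3].
rewrite !inordK; try lia; split.
- by rewrite h1.
- case: ifP => hh; lia.
- rewrite -(inj_eq val_inj) /= !inordK; lia.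
Qed.

Lemma LB_ok k s : layer_ok (Layer s (LB k)).
Proof.
rewrite /layer_ok /=; apply/andP; split.
  apply/allP => p /mapP [j]; rewrite mem_filter mem_iota => /andP [/andP [h1 h2] h3] ->.
  rewrite /lnn_pair /= !inordK; lia.
rewrite /LB -map_comp.
apply: (@uniq_flat _ _ (fun j => inord j) (fun j => inord j.+1)
   (fun z : 'I_n => if z %% 2 == k %% 2 then (z : nat) else z.-1)).
  exact/filter_uniq/iota_uniq.
move=> j; rewrite mem_filter mem_iota => /andP [/andP [h1 h2] h3].
rewrite !inordK; try lia; split.
- by rewrite h1.
- case: ifP => hh; lia.
- rewrite -(inj_eq val_inj) /= !inordK; lia.
Qed.
End Lay.

Section Stt.
Variable N : nat.
Local Notation n := N.+1.

Definition U (x : basis n) (a : nat) : bool := \big[addb/false]_(i < n | i < a) x i.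

Lemma U0 x : U x 0 = false.
Proof. by rewrite /U big1. Qed.

Lemma U_succ x k : k < n -> U x k.+1 = U x k (+) x (inord k).
Proof.
move=> hk; rewrite /U (bigD1 (inord k)) /=; last by rewrite inordK.
rewrite addbC; congr addb; apply: eq_bigl => i.
rewrite -(inj_eq val_inj) /= inordK //; lia.
Qed.

Definition St k (x : basis n) : basis n :=
  [ffun w : 'I_n => U x (EE n k w) (+) U x (EE n k w.+1)].

Lemma S0 x : St 0 x = x.
Proof.
apply/ffunP => w; have hw := ltn_ord w; rewrite ffunE !EE0; try lia.
by rewrite U_succ // addbA addbb inord_val.
Qed.

Lemma Sm x : St n.+1 x = revmap x.
Proof.
apply/ffunP => w; have hw := ltn_ord w; rewrite !ffunE !EEm; try lia.
rewrite (_ : n - w = (n - w.+1).+1); last lia.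
rewrite U_succ; last lia.
rewrite addbC addbA addbb; congr (x _); apply: val_inj; rewrite /= inordK //; lia.
Qed.

Lemma Sstep k x : k < n.+1 -> cmap (LB N k) (cmap (LA N k) (St k x)) = St k.+1 x.
Proof.
move=> hk; apply/ffunP => w; rewrite round_spec !ffunE.
have hw := ltn_ord w.
rewrite !EEstep //; try lia.
case: (sgm_cases k hw) => [[hP [-> ->]] | [hP [-> ->]]].
  rewrite (_ : (w.+1 %% 2 == k %% 2) = false) ?andbF /=; last lia.
  case h0: (0 < w) => /=; last by rewrite addbF addbF addbC.
  rewrite (_ : (w.-1 %% 2 == k %% 2) = false) /=; last lia.
  by rewrite addbF addbF addbC.
rewrite (_ : (w.+1 %% 2 == k %% 2) = true) /=; last lia.
case h0: (0 < w) => /=.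
  rewrite (_ : (w.-1 %% 2 == k %% 2) = true) /=; last lia.
  case hn: (w.+1 < n) => /=; rewrite !inordK; try lia.
    rewrite (_ : w.-1.+1 = w); last lia.
    move: (U x (EE n k w.-1)) (U x (EE n k w)) (U x (EE n k w.+1)) (U x (EE n k w.+2)).
    by do 4!case.
  rewrite (_ : w.-1.+1 = w); last lia.
  move: (U x (EE n k w.-1)) (U x (EE n k w)) (U x (EE n k w.+1)).
  by do 3!case.
case hn: (w.+1 < n) => /=; rewrite ?ffunE ?inordK; try lia.
all: try by rewrite addbF.
all: move: (U x (EE n k w)) (U x (EE n k w.+1)) (U x (EE n k w.+2)).
all: by do 3!case.
Qed.
End Stt.

Local Open Scope ring_scope.

Definition phi (b c : bool) : algC := if b then (if c then 'i else - 'i) else 1.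

Lemma phase4 A0 a H0 b :
  phi (A0 (+) (H0 (+) b)) false * (phi ((A0 (+) a) (+) (H0 (+) b)) true *
   (phi (A0 (+) H0) true * phi ((A0 (+) a) (+) H0) false)) = if a && b then -1 else 1.
Proof.
have i2 : 'i * 'i = -1 :> algC by rewrite -expr2 sqrCi.
by case: A0; case: a; case: H0; case: b;
  rewrite /phi /= ?(mulr1, mul1r, mulNr, mulrN, i2, opprK).
Qed.

Section Ph.
Variable N : nat.
Local Notation n := N.+1.
Variable D : seq ('I_n * 'I_n).

Definition pitems (p : 'I_n * 'I_n) : seq (nat * nat * bool) :=
  let lo := minn p.1 p.2 in let hi := maxn p.1 p.2 in
  [:: (lo, hi.+1, false); (lo.+1, hi.+1, true); (lo, hi, true)] ++
  (if (lo.+1 < hi)%N then [:: (lo.+1, hi, false)] else [::]).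
Definition items := flatten [seq pitems p | p <- D].

Definition adj (tw : 'I_n.+1 * 'I_n) (a b : nat) :=
  ((EE n tw.1 tw.2 == a) && (EE n tw.1 tw.2.+1 == b)) ||
  ((EE n tw.1 tw.2 == b) && (EE n tw.1 tw.2.+1 == a)).
Definition slot (it : nat * nat * bool) : 'I_n.+1 * 'I_n :=
  odflt (ord0, ord0) [pick tw | adj tw it.1.1 it.1.2].

Lemma slot_spec it : (it.1.1 < it.1.2 <= n)%N -> adj (slot it) it.1.1 it.1.2.
Proof.
move=> hab; rewrite /slot; case: pickP => [tw H|H] //=; exfalso.
have [ht hm] := meetE hab.
have ha : (it.1.1 <= n)%N by lia.
have hb : (it.1.2 <= n)%N by lia.
case: hm => [[h1 h2]|[h1 h2]]; have := H (Ordinal ht, Ordinal h2);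
  rewrite /adj /= h1 !EEepos ?eqxx ?orbT //; lia.
Qed.

Definition gate (it : nat * nat * bool) : sgate * 'I_n :=
  (if it.2 then GP else GPdg, (slot it).2).
Definition sing (t : nat) := [seq gate it | it <- items & ((slot it).1 == t :> nat)].
Definition rnd (t : nat) := [:: Layer (sing t) (LA N t); Layer [::] (LB N t)].
Definition lays k := flatten [seq rnd t | t <- iota 0 k].

Lemma run_lays k : (k <= n.+1)%N -> forall x,
  (foldl (@rstep n) (id, fun _ => 1) (lays k)).1 x = St k x /\
  (foldl (@rstep n) (id, fun _ => 1) (lays k)).2 x = \prod_(t < k) sphase (sing t) (St t x).
Proof.
elim: k => [|k IH] hk x.
  by rewrite /lays /= S0 big_ord0.
rewrite /lays (_ : iota 0 k.+1 = iota 0 k ++ [:: k]); last by rewrite -addn1 iotaD.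
rewrite map_cat flatten_cat foldl_cat /= -/(lays k).
have [IH1 IH2] := IH (ltnW hk) x.
rewrite /rstep /= IH1 IH2 Sstep //.
split => //.
by rewrite big_ord_recr /= /sphase big_nil mul1r mulrC.
Qed.

Hypothesis hD : all (fun p => p.1 != p.2) D.

Lemma pitems_valid p it : p.1 != p.2 -> it \in pitems p -> (it.1.1 < it.1.2 <= n)%N.
Proof.
case: p => i j /= hp0; have hp : (nat_of_ord i != nat_of_ord j) by exact: hp0.
have h1 := ltn_ord i; have h2 := ltn_ord j.
rewrite /pitems mem_cat !inE => /orP [/orP [/eqP -> | /orP [/eqP -> | /eqP ->]] | ] /=; try lia.
case: ifP => h; last by rewrite in_nil.
rewrite inE => /eqP -> /=; lia.
Qed.

Lemma items_valid it : it \in items -> (it.1.1 < it.1.2 <= n)%N.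
Proof.
move/flatten_mapP => [p hp]; apply: pitems_valid; exact: (allP hD p hp).
Qed.

Lemma gph_item it x : (it.1.1 < it.1.2 <= n)%N ->
  gph (gate it) (St (slot it).1 x) = phi (U x it.1.1 (+) U x it.1.2) it.2.
Proof.
move=> h; have := slot_spec h; rewrite /gph /gate /= ffunE.
by case/orP => /andP [/eqP -> /eqP ->]; rewrite ?[U x it.1.2 (+) _]addbC; case: (it.2).
Qed.

Lemma pair_phase p x : p.1 != p.2 ->
  \prod_(it <- pitems p) phi (U x it.1.1 (+) U x it.1.2) it.2 =
  if x p.1 && x p.2 then -1 else 1.
Proof.
case: p => i j /= hp0; have hp : (nat_of_ord i != nat_of_ord j) by exact: hp0.
have h1 := ltn_ord i; have h2 := ltn_ord j.
have Hx : x (inord (minn i j)) && x (inord (maxn i j)) = x i && x j.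
  by rewrite /minn /maxn; case: ltnP => h; rewrite !inord_val // andbC.
rewrite -Hx /pitems big_cat /= !big_cons big_nil !mulr1.
rewrite (@U_succ N x (minn i j)); last lia.
rewrite (@U_succ N x (maxn i j)); last lia.
case: ifP => h.
  rewrite big_cons big_nil /= mulr1 (@U_succ N x (minn i j)); last lia.
  rewrite -!mulrA; exact: phase4.
have e : U x (maxn i j) = U x (minn i j) (+) x (inord (minn i j)).
  by rewrite (_ : maxn i j = (minn i j).+1) ?U_succ //; lia.
have F4 : phi ((U x (minn i j) (+) x (inord (minn i j))) (+) U x (maxn i j)) false = 1.
  by rewrite e addbb.
rewrite big_nil mulr1 -(phase4 (U x (minn i j)) (x (inord (minn i j))) (U x (maxn i j))
   (x (inord (maxn i j)))) F4 mulr1 /=.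
by rewrite mulrA.
Qed.


Lemma phase_total x : \prod_(t < n.+1) sphase (sing t) (St t x) = czph D x.
Proof.
have E1 : forall t, sphase (sing t) (St t x) =
    \prod_(it <- items | (slot it).1 == t :> nat) gph (gate it) (St t x).
  by move=> t; rewrite /sphase /sing big_map big_filter.
under eq_bigr do rewrite E1.
rewrite (exchange_big_dep xpredT) //=.
rewrite big_seq; under eq_bigr => it hit.
  rewrite (big_pred1 (slot it).1); last by move=> t; rewrite /= eq_sym (inj_eq val_inj).
  rewrite gph_item; last exact: items_valid.
  over.
rewrite -big_seq /items big_flatten big_map /czph big_seq [RHS]big_seq.
apply: eq_bigr => p hp; exact/pair_phase/(allP hD).
Qed.
End Ph.


Unset Implicit Arguments.

Lemma size_lays N D k : size (@lays N D k) = (2 * k)%N.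
Proof.
elim: k => [|k IH] //.
rewrite /lays (_ : iota 0 k.+1 = iota 0 k ++ [:: k]); last by rewrite -addn1 iotaD.
rewrite map_cat flatten_cat size_cat -/(lays D k) IH /=; lia.
Qed.

Lemma all_lays N D k : all (@layer_ok _) (@lays N D k).
Proof.
elim: k => [|k IH] //.
rewrite /lays (_ : iota 0 k.+1 = iota 0 k ++ [:: k]); last by rewrite -addn1 iotaD.
rewrite map_cat flatten_cat all_cat -/(lays D k) IH /= LA_ok LB_ok.
done.
Qed.

Theorem theorem2 (n : nat) (hn : (2 <= n)%N) (D : seq ('I_n * 'I_n))
    (hD : all (fun p => p.1 != p.2) D) :
  exists (ls : seq (layer n)) (fin : seq (sgate * 'I_n)),
    [/\ (size ls <= 2 * n + 2)%N, all (@layer_ok n) ls &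
        forall y x : basis n,
          circuit_op ls fin y x = opmul (reversal_op (n:=n)) (czlayer_op D) y x].
Proof.
case: n hn D hD => [|N] // hn D hD.
have Hs : (size (lays D N.+2) <= 2 * N.+1 + 2)%N by rewrite size_lays; lia.
have Ha : all (@layer_ok _) (lays D N.+2) by apply: all_lays.
exists (lays D N.+2), [::]; split => //.
- move=> y x; rewrite circuit_mono rhs_mono /mono.
  have [H1 H2] := @run_lays N D N.+2 (leqnn _) x.
  by rewrite H1 H2 Sm phase_total // /sphase big_nil mul1r.
Qed.
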